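(* Let $V$ be a commutative valuation domain with quotient field $F$, $K/F$ a finite Galois extension with group $G$, $S$ the integral closure of $V$ in $K$, and $f:G\times G\to S\setminus\{0\}$ a normalized $2$-cocycle such that $f(\sigma,\tau)\notin M^2$ for every $\sigma,\tau\in G$ and every maximal ideal $M$ of $S$. Then for each maximal ideal $M$ of $S$, the graph $\mathrm{Gr}(f^M)$ is a chain.
   Context: $V$ has arbitrary Krull dimension. A normalized 2-cocycle satisfies $\sigma(f(\tau,\gamma))f(\sigma,\tau\gamma)=f(\sigma,\tau)f(\sigma\tau,\gamma)$, $f(1,\sigma)=f(\sigma,1)=1$. $H=\{\sigma\in G:f(\sigma,\sigma^{-1})\in U(S)\}$, a subgroup. For a maximal ideal $M$ of $S$, $\sigma H\le_M\tau H$ iff $f(\sigma,\sigma^{-1}\tau)\notin M$ is a well-defined preorder on the left coset space $G/H$; $\mathrm{Gr}(f^M)$ is the induced partial order on its equivalence classes (where $\sigma H\sim\tau H$ iff $\sigma H\le_M\tau H$ and $\tau H\le_M\sigma H$). A chain is a totally ordered set. *)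

(* Defs.v *)
From HB Require Import structures.
From mathcomp Require Import all_boot all_order all_algebra all_fingroup all_field.
Set Implicit Arguments. Unset Strict Implicit. Unset Printing Implicit Defensive.
Import GRing.Theory.
Local Open Scope ring_scope.

Section Defs.
Variables (F : fieldType) (L : splittingFieldType F).

(* V is a valuation domain with quotient field F: a subring of F such that
   for every nonzero x, x or x^-1 lies in V. *)
Definition valuation_ring_of (V : {pred F}) : Prop :=
  [/\ 1 \in V, {in V &, forall x y, x - y \in V}, {in V &, forall x y, x * y \in V}
    & forall x : F, x != 0 -> x \in V \/ x^-1 \in V].

Definition integral_over (V : {pred F}) (x : L) : Prop :=
  exists p : {poly F}, [/\ p \is monic, p \is a polyOver V
                         & root (map_poly (in_alg L) p) x].

Definition unit_in (S : L -> Prop) (x : L) : Prop :=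
  S x /\ exists y, S y /\ x * y = 1.

Definition ideal_of (S J : L -> Prop) : Prop :=
  [/\ forall x, J x -> S x, J 0, (forall x y, J x -> J y -> J (x + y)),
      (forall x, J x -> J (- x)) & (forall s x, S s -> J x -> J (s * x))].

Definition maximal_ideal_of (S M : L -> Prop) : Prop :=
  [/\ ideal_of S M, ~ M 1 &
      forall J, ideal_of S J -> (forall x, M x -> J x) -> ~ J 1 ->
        forall x, J x -> M x].

Definition ideal_sq (M : L -> Prop) (x : L) : Prop :=
  exists s : seq (L * L), (forall p, p \in s -> M p.1 /\ M p.2) /\
    x = \sum_(p <- s) p.1 * p.2.

(* composition sigma o tau (MathComp's group law is (s * t) a = t (s a)) *)
Definition gcomp (s t : gal_of {:L}) : gal_of {:L} := (t * s)%g.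

Definition normalized_2cocycle (f : gal_of {:L} -> gal_of {:L} -> L) : Prop :=
  (forall s t g : gal_of {:L}, s (f t g) * f s (gcomp t g) = f s t * f (gcomp s t) g) /\
  (forall s : gal_of {:L}, f 1%g s = 1 /\ f s 1%g = 1).

Definition inH (S : L -> Prop) (f : gal_of {:L} -> gal_of {:L} -> L)
  (s : gal_of {:L}) : Prop := unit_in S (f s (s^-1)%g).

Definition lcoset_of (S : L -> Prop) f (s : gal_of {:L}) : gal_of {:L} -> Prop :=
  fun x => exists h, inH S f h /\ x = gcomp s h.

Definition is_left_coset S f (A : gal_of {:L} -> Prop) : Prop :=
  exists s, A = lcoset_of S f s.

Definition coset_leM S f (M : L -> Prop) (A B : gal_of {:L} -> Prop) : Prop :=
  exists s t : gal_of {:L}, [/\ A = lcoset_of S f s, B = lcoset_of S f t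
                & ~ M (f s (gcomp (s^-1)%g t))].

(* Gr(f^M) is a chain: the partial order on classes of the preorder is total,
   i.e. any two cosets are comparable for <=_M. *)
Definition Gr_is_chain S f M : Prop :=
  forall A B, is_left_coset S f A -> is_left_coset S f B ->
    coset_leM S f M A B \/ coset_leM S f M B A.

End Defs.

(* Main.v *)
Require Import Defs.
From HB Require Import structures.
From mathcomp Require Import all_boot all_order all_algebra all_fingroup all_field.
From Stdlib Require Import Classical.
Import GRing.Theory.
Local Open Scope ring_scope.
Section T.
Variables (F : fieldType) (L : splittingFieldType F).

Lemma galK1 (g : gal_of {:L}) (a : L) : g ((g^-1)%g a) = a.
Proof. by rewrite -galM ?memvf // mulVg gal_id. Qed.
Lemma galK2 (g : gal_of {:L}) (a : L) : (g^-1)%g (g a) = a.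
Proof. by rewrite -galM ?memvf // mulgV gal_id. Qed.

Lemma integral_gal (V : {pred F}) (g : gal_of {:L}) x :
  integral_over V x -> integral_over V (g x).
Proof.
case=> p [mp Vp rp]; exists p; split => //.
have -> : map_poly (in_alg L) p = map_poly g (map_poly (in_alg L) p).
  rewrite -map_poly_comp; apply: eq_map_poly => c /=.
  by rewrite linearZ /= rmorph1.
by rewrite /root horner_map (eqP rp) rmorph0.
Qed.

Lemma integral_galE (V : {pred F}) (g : gal_of {:L}) x :
  integral_over V (g x) -> integral_over V x.
Proof. by move/(integral_gal V (g^-1)%g); rewrite galK2. Qed.

Lemma ideal_gal (S : L -> Prop) (g : gal_of {:L}) J :
  (forall x, S x -> S (g x)) -> (forall x, S (g x) -> S x) ->
  ideal_of S J -> ideal_of S (fun x => J (g x)).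
Proof.
move=> Sg Sg' [JS J0 JD JN JM]; split.
- by move=> x /JS /Sg'.
- by rewrite rmorph0.
- by move=> x y Jx Jy; rewrite rmorphD; apply: JD.
- by move=> x Jx; rewrite rmorphN; apply: JN.
- by move=> s x Ss Jx; rewrite rmorphM; apply: JM => //; apply: Sg.
Qed.

Lemma maximal_gal (V : {pred F}) (g : gal_of {:L}) M :
  maximal_ideal_of (integral_over V) M ->
  maximal_ideal_of (integral_over V) (fun x => M (g x)).
Proof.
move=> [IM M1 Mmax]; split.
- by apply: ideal_gal => // x; [apply: integral_gal | apply: integral_galE].
- by rewrite rmorph1.
move=> J IJ MJ J1 x Jx.
pose J' := fun y => J ((g^-1)%g y).
have IJ' : ideal_of (integral_over V) J'.
  by apply: ideal_gal => // y; [apply: integral_gal | apply: integral_galE].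
apply: (Mmax J' IJ').
- by move=> y My; apply: MJ; rewrite galK1.
- by rewrite /J' rmorph1.
- by rewrite /J' galK2.
Qed.

End T.

Theorem proposition2p10 (F : fieldType) (L : splittingFieldType F)
  (V : {pred F}) (f : gal_of {:L} -> gal_of {:L} -> L) :
  valuation_ring_of V ->
  galois 1%VS {:L} ->
  normalized_2cocycle f ->
  (forall s t, integral_over V (f s t) /\ f s t != 0) ->
  (forall M, maximal_ideal_of (integral_over V) M ->
     forall s t, ~ ideal_sq M (f s t)) ->
  forall M, maximal_ideal_of (integral_over V) M ->
    Gr_is_chain (integral_over V) f M.
Proof.
move=> _ _ [coc norm] _ hsq M maxM A B [s ->] [t ->].
case: (classic (M (f s (gcomp (s^-1)%g t)))) => Ms; last first.
  by left; exists s, t.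
case: (classic (M (f t (gcomp (t^-1)%g s)))) => Mt; last first.
  by right; exists t, s.
exfalso.
set b := gcomp (s^-1)%g t.
have e := coc s b (b^-1)%g.
have e1 : gcomp b (b^-1)%g = 1%g by rewrite /gcomp mulVg.
have e2 : gcomp s b = t by rewrite /b /gcomp -mulgA mulVg mulg1.
have e3 : (b^-1)%g = gcomp (t^-1)%g s by rewrite /b /gcomp invMg invgK.
rewrite e1 (proj2 (norm s)) mulr1 e2 in e.
have := (hsq _ (@maximal_gal F L V s M maxM) b (b^-1)%g); apply.
exists [:: ((s^-1)%g (f s b), (s^-1)%g (f t (b^-1)%g))]; split.
  by move=> p; rewrite inE => /eqP -> /=; rewrite !(@galK1 F L) -e3 in Mt *; split.
rewrite big_seq1 /= -rmorphM. rewrite -e; symmetry; exact: (@galK2 F L).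
Qed.
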